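(* Let $\alpha=(\alpha_1,\dots,\alpha_s)\in\mathbb{K}_s$ and let $1\le i<j\le s$. Then $\alpha^i=-\overline{\alpha^j}$ (as tuples) if and only if $\alpha$ is symmetric and $i+j=s+1$.
   Context: $\mathbb{K}_s=\{(\alpha_1,\dots,\alpha_s)\in\mathbb{Z}^s:\ \alpha_k\alpha_{k+1}<0 \text{ for all } 1\le k\le s-1\}$, with all entries nonzero. For $\beta=(\beta_1,\dots,\beta_s)\in\mathbb{Z}^s$, $-\beta=(-\beta_1,\dots,-\beta_s)$ and $\overline{\beta}=(\beta_s,\dots,\beta_1)$; $\beta$ is symmetric if $\beta=-\overline{\beta}$. For $1\le i\le s$, $\alpha^i=(\alpha_1,\dots,\alpha_{i-1},\alpha_i*1,\alpha_{i+1},\dots,\alpha_s)$, where $\alpha_i*1=\alpha_i-1$ if $\alpha_i>0$ and $\alpha_i*1=\alpha_i+1$ otherwise. *)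

(* Defs.v *)
(* tuples are sequences of integers (seq int), indices 1-based
   in the paper, 0-based in seq (nth). *)
From mathcomp Require Import all_boot all_order all_algebra.
Set Implicit Arguments. Unset Strict Implicit. Unset Printing Implicit Defensive.
Import Order.TTheory GRing.Theory Num.Theory.
Local Open Scope ring_scope.

Definition inK (s : nat) (alpha : seq int) : Prop :=
  size alpha = s /\
  (forall k : nat, (k < s)%N -> nth 0 alpha k != 0) /\
  (forall k : nat, (k.+1 < s)%N -> nth 0 alpha k * nth 0 alpha k.+1 < 0).

Definition star1 (a : int) : int := if 0 < a then a - 1 else a + 1.

Definition sup (alpha : seq int) (i : nat) : seq int :=
  set_nth 0 alpha i.-1 (star1 (nth 0 alpha i.-1)).

Definition negs (beta : seq int) : seq int := map (fun x => - x) beta.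

Definition bar (beta : seq int) : seq int := rev beta.

Definition symmetricK (beta : seq int) : Prop := beta = negs (bar beta).

(* Main.v *)
Require Import Defs.
From mathcomp Require Import all_boot all_order all_algebra.
From mathcomp Require Import zify.
Import Order.TTheory GRing.Theory Num.Theory.

Local Open Scope ring_scope.

Lemma star1_neq (x : int) : star1 x <> x.
Proof. rewrite /star1; case: ifP => _; lia. Qed.

Lemma star1_neqN (x : int) : star1 x <> - x.
Proof. rewrite /star1; case: ifP => _; lia. Qed.

Lemma star1N (x : int) : x != 0 -> star1 (- x) = - star1 x.
Proof. rewrite /star1 => Hx; case: ifP => H1; case: ifP => H2; lia. Qed.

Lemma star1_inj (x y : int) : x != 0 -> y != 0 -> (0 < x) != (0 < y) ->
  star1 x = - star1 y -> x = - y.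
Proof. rewrite /star1 => Hx Hy; case: ifP => H1; case: ifP => H2; rewrite ?H1 ?H2 /=; lia. Qed.

Lemma mul_neg {x y : int} : x * y < 0 -> (0 < y) = ~~ (0 < x).
Proof.
move=> H; case: (ltrgtP 0 x) => Hx; case: (ltrgtP 0 y) => Hy //=;
  rewrite -?Hx -?Hy ?mulr0 ?mul0r ?ltxx in H; try done; nia.
Qed.

Lemma sgnP (s : nat) (a : seq int) : inK s a ->
  forall k, (k < s)%N -> (0 < nth 0 a k) = (0 < nth 0 a 0) (+) odd k.
Proof.
move=> [_ [_ Hm]]; elim=> [|k IH] Hk; first by rewrite addbF.
rewrite (mul_neg (Hm k Hk)) IH; last by lia.
by rewrite /= addbN.
Qed.

Lemma nth_sup (a : seq int) i k : nth 0 (sup a i) k =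
  if k == i.-1 then star1 (nth 0 a i.-1) else nth 0 a k.
Proof. by rewrite /sup nth_set_nth. Qed.

Lemma size_sup (a : seq int) i : (1 <= i)%N -> (i <= size a)%N -> size (sup a i) = size a.
Proof. move=> H1 H2; rewrite /sup size_set_nth; lia. Qed.

Lemma nth_negbar (b : seq int) k : (k < size b)%N ->
  nth 0 (negs (bar b)) k = - nth 0 b (size b - k.+1).
Proof.
move=> Hk; rewrite /negs /bar (nth_map 0); last by rewrite size_rev.
by rewrite nth_rev.
Qed.


Section Aux.
Variables (s I J : nat) (g : nat -> int).
Hypothesis HIJ : (I < J)%N.
Hypothesis HJs : (J < s)%N.

Definition Rel := forall k, (k < s)%N ->
    (if k == I then star1 (g I) else g k) =
    - (if (s - k.+1)%N == J then star1 (g J) else g (s - k.+1)%N).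

Lemma fwd_sum : Rel -> (I + J = s - 1)%N.
Proof.
move=> H; apply/eqP; apply/negPn/negP => Hne.
have HpJ : ((s - I.+1)%N == J) = false.
  by apply/negbTE; apply/eqP; move/eqP: Hne; clear -HIJ HJs; lia.
have HIs : (I < s)%N by clear -HIJ HJs; lia.
have H1 := H I HIs; rewrite eqxx HpJ in H1.
case: (eqVneq (s - I.+1)%N I) => HpI.
- by apply: (@star1_neqN (g I)); rewrite H1 HpI.
- have Hps : ((s - I.+1) < s)%N by clear -HIs; lia.
  have H2 := H _ Hps; rewrite (negbTE HpI) in H2.
  have Ep : (s - (s - I.+1).+1 = I)%N by clear -HIs; lia.
  have HIJ' : I != J by apply/eqP; clear -HIJ; lia.
  rewrite Ep (negbTE HIJ') in H2.
  by apply: (@star1_neq (g I)); rewrite H1 H2 opprK.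
Qed.

Lemma fwd_IJ : Rel -> (forall k, (k < s)%N -> g k != 0) ->
  (forall k, (k < s)%N -> (0 < g k) = (0 < g 0) (+) odd k) -> g I = - g J.
Proof.
move=> H Hnz Hsg; have Hsum := fwd_sum H.
have HIs : (I < s)%N by clear -HIJ HJs; lia.
have H1 := H I HIs; rewrite eqxx in H1.
have EJ : ((s - I.+1) == J)%N by apply/eqP; clear -Hsum HIs; lia.
rewrite EJ in H1.
case: (boolP (odd I == odd J)) => Hpar.
- exfalso.
  have Hp : odd (I + J) = false by rewrite oddD (eqP Hpar) addbb.
  have HmI : (I + J)./2 != I by apply/eqP; move: Hp; clear -HIJ; lia.
  have HmJ : (s - ((I + J)./2).+1 != J)%N by apply/eqP; move: Hp; clear -HIJ Hsum HJs; lia.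
  have Hms : ((I + J)./2 < s)%N by clear -HIJ HJs; lia.
  have H2 := H _ Hms; rewrite (negbTE HmI) (negbTE HmJ) in H2.
  have Hmm : (s - ((I + J)./2).+1 = (I + J)./2)%N by move: Hp; clear -HIJ Hsum HJs; lia.
  rewrite Hmm in H2.
  have : g (I + J)./2 = 0 by move: H2; clear; lia.
  by apply/eqP; apply: Hnz.
- apply: star1_inj => //; try (apply: Hnz => //).
  rewrite (Hsg I HIs) (Hsg J HJs).
  by move: Hpar; case: (odd I); case: (odd J); case: (0 < g 0).
Qed.

Lemma fwd_sym : Rel -> (forall k, (k < s)%N -> g k != 0) ->
  (forall k, (k < s)%N -> (0 < g k) = (0 < g 0) (+) odd k) ->
  forall k, (k < s)%N -> g k = - g (s - k.+1)%N.
Proof.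
move=> H Hnz Hsg k Hk; have Hsum := fwd_sum H.
have HfIJ := fwd_IJ H Hnz Hsg.
have H1 := H k Hk.
case: (eqVneq k I) => HkI.
- subst k; have -> : (s - I.+1 = J)%N by clear -Hsum HJs HIJ; lia.
  by rewrite HfIJ.
- case: (eqVneq k J) => HkJ.
  + subst k; have -> : (s - J.+1 = I)%N by clear -Hsum HJs HIJ; lia.
    by rewrite HfIJ opprK.
  + have Hk' : (s - k.+1 != J)%N.
      by apply/eqP => E; move/eqP: HkI; apply; clear -E Hsum Hk HJs HIJ; lia.
    by move: H1; rewrite (negbTE HkI) (negbTE Hk').
Qed.

Lemma bwd : (I + J = s - 1)%N -> (forall k, (k < s)%N -> g k != 0) ->
  (forall k, (k < s)%N -> g k = - g (s - k.+1)%N) -> Rel.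
Proof.
move=> Hsum Hnz Hsy k Hk.
have HIs : (I < s)%N by clear -HIJ HJs; lia.
case: (eqVneq k I) => HkI.
- subst k; have -> : ((s - I.+1) == J)%N by apply/eqP; clear -Hsum HIs; lia.
  have HIJ' : g I = - g J.
    rewrite (Hsy I HIs).
    by have -> : (s - I.+1 = J)%N by clear -Hsum HIs; lia.
  by rewrite HIJ' star1N ?opprK //; apply: Hnz.
- have -> : ((s - k.+1) == J)%N = false.
    apply/negbTE/eqP => E'; move/eqP: HkI; apply; clear -E' Hsum Hk HJs HIJ; lia.
  exact: Hsy k Hk.
Qed.
End Aux.
Arguments fwd_sum {s I J g}.
Arguments fwd_IJ {s I J g}.
Arguments fwd_sym {s I J g}.
Arguments bwd {s I J g}.

Theorem lemma1 (s : nat) (alpha : seq int) (i j : nat) :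
  inK s alpha -> (1 <= i)%N -> (i < j)%N -> (j <= s)%N ->
  (sup alpha i = negs (bar (sup alpha j)) <->
   symmetricK alpha /\ (i + j = s + 1)%N).
Proof.
move=> HK Hi Hij Hj; have [Hs [Hnz Hm]] := HK.
have Hsi : size (sup alpha i) = s by rewrite size_sup ?Hs //; clear -Hij Hj; lia.
have Hsj : size (sup alpha j) = s by rewrite size_sup ?Hs //; clear -Hij Hj; lia.
have HIJ : (i.-1 < j.-1)%N by clear -Hi Hij; lia.
have HJs : (j.-1 < s)%N by clear -Hi Hij Hj; lia.
have Hsg := sgnP _ _ HK.
have key : forall k, (k < s)%N ->
  nth 0 (negs (bar (sup alpha j))) k =
  - (if (s - k.+1)%N == j.-1 then star1 (nth 0 alpha j.-1) else nth 0 alpha (s - k.+1)%N).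
  by move=> k Hk; rewrite nth_negbar Hsj // nth_sup.
split.
- move=> E.
  have H : Rel s i.-1 j.-1 (nth 0 alpha).
    by move=> k Hk; rewrite -key // -E nth_sup.
  have Hsum := fwd_sum HIJ HJs H.
  split; last by clear -Hsum Hi Hij; lia.
  apply: (@eq_from_nth _ 0); first by rewrite /negs /bar size_map size_rev.
  move=> k Hk; rewrite Hs in Hk; rewrite nth_negbar; last by rewrite Hs.
  rewrite Hs; exact: (fwd_sym HIJ HJs H Hnz Hsg k Hk).
- move=> [Hsym Hsum].
  have Hsy : forall k, (k < s)%N -> nth 0 alpha k = - nth 0 alpha (s - k.+1)%N.
    by move=> k Hk; rewrite {1}Hsym nth_negbar Hs.
  have Hsum' : (i.-1 + j.-1 = s - 1)%N by clear -Hsum Hi Hij; lia.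
  have R := bwd HIJ HJs Hsum' Hnz Hsy.
  apply: (@eq_from_nth _ 0); first by rewrite /negs /bar size_map size_rev Hsi Hsj.
  move=> k Hk; rewrite Hsi in Hk; rewrite key // nth_sup.
  exact: R k Hk.
Qed.
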